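(* Let $L$ be a finite geometric lattice equipped with a sheaf $F$ and let $f:\widetilde L\to L$ be its Boolean cover. Then for any atom $a\in L$ there is a long exact sequence $$\cdots\to\mathrm{HC}_i(\widetilde{L^a};F)\to\mathrm{HC}_i(\widetilde{L_a};F)\to\mathrm{HC}_i(\widetilde L;F)\to\mathrm{HC}_{i-1}(\widetilde{L^a};F)\to\mathrm{HC}_{i-1}(\widetilde{L_a};F)\to\cdots$$
   Context: A finite lattice $L$ with minimum $\mathbf{0}$ is graded by a rank function $rk$ with $rk(\mathbf{0})=0$; its atoms are the rank-$1$ elements; it is atomic if every element is a join of atoms (the empty join being $\mathbf{0}$); it is geometric if it is graded and atomic and $rk(x\vee y)+rk(x\wedge y)\le rk(x)+rk(y)$ for all $x,y$. A sheaf $F$ on a poset assigns an $R$-module $F(x)$ ($R$ a commutative ring with $1$) to each element and a map $F^y_x:F(y)\to F(x)$ to each $x\le y$, functorially (a contravariant functor). For an atom $a$ of $L$: the deletion $L_a$ is the subposet of elements of $L$ expressible as joins of atoms other than $a$ (a graded atomic lattice whose atoms are the atoms of $L$ other than $a$); the restriction $L^a$ is the interval $\{x\in L:x\ge a\}$ (a graded atomic lattice with minimum $a$ whose atoms are the elements covering $a$). Both carry the restriction of $F$. Boolean cover of a graded atomic lattice $M$ with atoms $A_M$ and sheaf $G$: $\widetilde M$ is the lattice of all subsets of $A_M$ ordered by inclusion, with $f:\widetilde M\to M$ sending $S$ to the join of $S$ in $M$ (with $\varnothing\mapsto$ the minimum of $M$); the induced sheaf, still written $G$, is $G(S)=G(f(S))$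 with structure maps $G^{f(T)}_{f(S)}$. Cellular homology: for the Boolean lattice $B$ of subsets of a finite set $\{a_1,\dots,a_n\}$ with sheaf $G$, $C_k(B;G)=\bigoplus_{|x|=k}G(x)$ with differential $\sum\varepsilon^x_yG^x_y$ over pairs $y\subset x$, $|y|=|x|-1$, where $\varepsilon^x_y=(-1)^{j-1}$ if $x=\{a_{i_1},\dots,a_{i_k}\}$ ($i_1<\cdots<i_k$) and $y=x\setminus\{a_{i_j}\}$; $\mathrm{HC}_*(B;G)$ denotes its homology. *)

(* Defs.v *)
From HB Require Import structures.
From mathcomp Require Import all_boot all_order all_algebra.
Set Implicit Arguments. Unset Strict Implicit. Unset Printing Implicit Defensive.
Import Order.Theory GRing.Theory.

Section LatticeDefs.
Local Open Scope order_scope.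
Context {disp : Order.disp_t} {L : finTBLatticeType disp}.

Definition covers (x y : L) : bool :=
  (x < y) && [forall z : L, ~~ ((x < z) && (z < y))].

Definition graded (rk : L -> nat) : Prop :=
  rk \bot = 0%N /\ forall x y : L, covers x y -> rk y = (rk x).+1.

Definition atoms (rk : L -> nat) : {set L} := [set x | rk x == 1%N].

Definition bjoin (S : {set L}) : L := \big[Order.join/Order.bottom]_(y in S) y.

Definition atomic (rk : L -> nat) : Prop :=
  forall x : L, exists S : {set L}, S \subset atoms rk /\ x = bjoin S.

Definition geometric (rk : L -> nat) : Prop :=
  [/\ graded rk, atomic rk &
      forall x y : L, (rk (x `|` y) + rk (x `&` y) <= rk x + rk y)%N].

(* Sheaf of R-modules on L: modules Fm x, maps Fr x y : Fm y -> Fm x for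
   x <= y (R-linear, functorial).  Fr x y for x not <= y is irrelevant. *)
Definition is_sheaf (R : comPzRingType) (Fm : L -> lmodType R)
    (Fr : forall x y : L, Fm y -> Fm x) : Prop :=
  [/\ forall x y, x <= y -> forall u v, Fr x y (u + v)%R = (Fr x y u + Fr x y v)%R,
      forall x y, x <= y -> forall (r : R) u, Fr x y (r *: u)%R = (r *: Fr x y u)%R,
      forall x u, Fr x x u = u &
      forall x y z, x <= y -> y <= z -> forall u, Fr x y (Fr y z u) = Fr x z u].
End LatticeDefs.

(* Sheaves on Boolean lattices of subsets of a finite set A of "atoms"        *)
(* (atoms are elements of a finite type T; the Boolean lattice is the set of  *)
(* subsets S of A), together with their cellular chain complex.               *)
Record bcomplex (R : comPzRingType) (T : finType) := BComplex {
  bc_atoms : {set T};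
  bc_mod : {set T} -> lmodType R;
  bc_res : forall S S' : {set T}, bc_mod S' -> bc_mod S }.

Section BooleanHomology.
Local Open Scope ring_scope.
Context {R : comPzRingType} {T : finType}.

(* A chain is an element of the direct sum of all bc_mod S (a finite sum,
   represented as a dependent function). *)
Definition chain (C : bcomplex R T) := forall S : {set T}, bc_mod C S.

Definition chain0 (C : bcomplex R T) : chain C := fun S => 0.
Definition chainD (C : bcomplex R T) (c c' : chain C) : chain C :=
  fun S => c S + c' S.
Definition chainN (C : bcomplex R T) (c : chain C) : chain C := fun S => - c S.
Definition chainZ (C : bcomplex R T) (r : R) (c : chain C) : chain C :=
  fun S => r *: c S.

(* sign eps^{S + b}_S = (-1)^(j-1), j the position of b in S+b for the
   ordering of T given by enum_rank *)
Definition bsign (S : {set T}) (b : T) : R :=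
  (-1) ^+ #|[set y in S | (enum_rank y < enum_rank b)%N]|.

Definition bdiff (C : bcomplex R T) (c : chain C) : chain C :=
  fun S => \sum_(b in bc_atoms C :\: S)
             bsign S b *: @bc_res _ _ C S (b |: S) (c (b |: S)).

Definition is_kchain (C : bcomplex R T) (k : nat) (c : chain C) : Prop :=
  forall S : {set T}, ~~ ((S \subset bc_atoms C) && (#|S| == k)) -> c S = 0.

Definition is_cycle (C : bcomplex R T) (k : nat) (c : chain C) : Prop :=
  is_kchain k c /\ forall S : {set T}, bdiff c S = 0.

Definition is_boundary (C : bcomplex R T) (k : nat) (c : chain C) : Prop :=
  exists b : chain C, is_kchain k.+1 b /\ forall S : {set T}, c S = bdiff b S.

Definition homologous (C : bcomplex R T) (k : nat) (c c' : chain C) : Prop :=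
  is_boundary k (chainD c (chainN c')).

(* g induces an R-module homomorphism HC_k(C) -> HC_m(D): it maps k-cycles
   to m-cycles, is compatible with homology, and is R-linear on classes.
   (Every homomorphism HC_k(C) -> HC_m(D) arises this way by choosing
   representatives.) *)
Definition hom_map (C D : bcomplex R T) (k m : nat) (g : chain C -> chain D)
    : Prop :=
  [/\ forall c, is_cycle k c -> is_cycle m (g c),
      forall c c', is_cycle k c -> is_cycle k c' -> homologous k c c' ->
        homologous m (g c) (g c'),
      forall c c', is_cycle k c -> is_cycle k c' ->
        homologous m (g (chainD c c')) (chainD (g c) (g c')) &
      forall (r : R) c, is_cycle k c ->
        homologous m (g (chainZ r c)) (chainZ r (g c))].

Definition exact_at (C D E : bcomplex R T) (k m n : nat)
    (g : chain C -> chain D) (h : chain D -> chain E) : Prop :=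
  forall z, is_cycle m z ->
    (homologous n (h z) (chain0 E) <->
     exists w, is_cycle k w /\ homologous m (g w) z).

Definition hom_onto (C D : bcomplex R T) (k m : nat) (g : chain C -> chain D)
    : Prop :=
  forall z, is_cycle m z -> exists w, is_cycle k w /\ homologous m (g w) z.
End BooleanHomology.

Section Covers.
Local Open Scope order_scope.
Context {R : comPzRingType} {disp : Order.disp_t} {L : finTBLatticeType disp}.
Variables (rk : L -> nat) (Fm : L -> lmodType R)
          (Fr : forall x y : L, Fm y -> Fm x).

Definition cover_complex : bcomplex R L :=
  @BComplex R L (atoms rk) (fun S => Fm (bjoin S))
    (fun S S' => @Fr (bjoin S) (bjoin S')).

(* Boolean cover of the deletion L_a: subsets of atoms other than a; the
   join in L_a of such a set coincides with its join in L *)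
Definition deletion_complex (a : L) : bcomplex R L :=
  @BComplex R L (atoms rk :\ a) (fun S => Fm (bjoin S))
    (fun S S' => @Fr (bjoin S) (bjoin S')).

(* Boolean cover of the restriction L^a = [a, top]: subsets of the elements
   covering a; the join in L^a of S is a `|` (join of S in L) *)
Definition restriction_complex (a : L) : bcomplex R L :=
  @BComplex R L [set y | covers a y] (fun S => Fm (a `|` bjoin S))
    (fun S S' => @Fr (a `|` bjoin S) (a `|` bjoin S')).
End Covers.

Arguments is_sheaf {disp L R} Fm Fr.
Arguments cover_complex {R disp L} rk Fm Fr.
Arguments deletion_complex {R disp L} rk Fm Fr a.
Arguments restriction_complex {R disp L} Fm Fr a.

(* Main.v *)
Require Import Defs.
From HB Require Import structures.
From mathcomp Require Import all_boot all_order all_algebra.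
From mathcomp Require Import ring.
From Stdlib Require Import ClassicalEpsilon.
Set Implicit Arguments. Unset Strict Implicit. Unset Printing Implicit Defensive.
Import Order.Theory GRing.Theory.

Section Signs.
Local Open Scope ring_scope.
Variables (R : comPzRingType) (T : finType).

Definition sg (b : bool) : R := if b then -1 else 1.

Lemma card_setU1P (P : pred T) (b : T) (S : {set T}) : b \notin S ->
  #|[set y in b |: S | P y]| = (P b + #|[set y in S | P y]|)%N.
Proof.
move=> bS; case: (boolP (P b)) => Pb.
  have -> : [set y in b |: S | P y] = b |: [set y in S | P y].
    by apply/setP=> y; rewrite !inE; case: eqP => // ->; rewrite Pb.
  by rewrite cardsU1 inE (negbTE bS).
have -> : [set y in b |: S | P y] = [set y in S | P y].
  by apply/setP=> y; rewrite !inE; case: (y =P b) => [->|] //=; rewrite (negbTE Pb) !andbF.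
by [].
Qed.

Definition psign (P : pred T) (S : {set T}) : R := (-1) ^+ #|[set y in S | P y]|.

Lemma psignU1 (P : pred T) (b : T) (S : {set T}) : b \notin S -> psign P (b |: S) = sg (P b) * psign P S.
Proof.
move=> bS; rewrite /psign card_setU1P // exprD /sg; case: (P b) => /=.
  by rewrite expr1. by rewrite expr0.
Qed.

Lemma bsignE (S : {set T}) (b : T) : bsign S b = psign (fun y => (enum_rank y < enum_rank b)%N) S :> R.
Proof. by []. Qed.

Lemma bsignU1 (S : {set T}) (b c : T) : c \notin S ->
  bsign (c |: S) b = sg (enum_rank c < enum_rank b)%N * bsign S b :> R.
Proof. by move=> cS; rewrite !bsignE psignU1. Qed.

Lemma sg_sq b : sg b * sg b = 1.
Proof. by case: b; rewrite /sg ?mulrNN mulr1. Qed.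

Lemma psign_sq (P : pred T) (S : {set T}) : psign P S * psign P S = 1.
Proof. by rewrite /psign -exprD -signr_odd oddD addbb. Qed.

Lemma bsign_sq (S : {set T}) (b : T) : bsign S b * bsign S b = 1 :> R.
Proof. exact: psign_sq. Qed.

Lemma sg_swap (b c : T) : b != c ->
  sg (enum_rank b < enum_rank c)%N = - sg (enum_rank c < enum_rank b)%N.
Proof.
move=> bc; rewrite /sg; case: ltngtP => h.
- by [].
- by rewrite opprK.
- by move: bc; rewrite (enum_rank_inj (val_inj h)) eqxx.
Qed.

Lemma bsign_swap (S : {set T}) (b c : T) : b \notin S -> c \notin S -> b != c ->
  bsign S b * bsign (b |: S) c = - (bsign S c * bsign (c |: S) b) :> R.
Proof.
move=> bS cS bc; rewrite !bsignU1 // (sg_swap bc).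
by rewrite mulNr mulrN; congr (- _); rewrite mulrCA [RHS]mulrCA [bsign S b * _]mulrC.
Qed.

Lemma sum_antisym (V : zmodType) (Y : {set T}) (f : T -> T -> V) :
  (forall b c, b \in Y -> c \in Y -> b != c -> f c b = - f b c) ->
  \sum_(b in Y) \sum_(c in Y :\ b) f b c = 0.
Proof.
move=> fA.
have E : forall b, \sum_(c in Y :\ b) f b c =
   \sum_(c in Y | (enum_rank b < enum_rank c)%N) f b c +
   \sum_(c in Y | (enum_rank c < enum_rank b)%N) f b c.
  move=> b; rewrite (bigID (fun c => (enum_rank b < enum_rank c)%N)) /=.
  congr (_ + _); apply: eq_bigl => c; rewrite !inE.
    by case: (c =P b) => [->|_]; rewrite /= ?ltnn ?andbF.
  case: (c =P b) => [->|cb]; first by rewrite /= ?ltnn ?andbF.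
  rewrite /= -leqNgt leq_eqVlt; case: eqP => [h|] /=; last by [].
  by exfalso; apply: cb; apply: enum_rank_inj; apply: val_inj.
rewrite (eq_bigr _ (fun b _ => E b)) big_split /=.
rewrite (exchange_big_dep (fun c => c \in Y)) /=; last by move=> ? ? _ /andP[].
rewrite -big_split /=; apply: big1 => b Yb.
rewrite Yb /= -big_split /=; apply: big1 => c /andP[Yc cb].
rewrite (fA b c) ?addNr //.
by apply/eqP => e; move: cb; rewrite e ltnn.
Qed.
End Signs.
Section Gen.
Local Unset Implicit Arguments.
Local Open Scope ring_scope.
Variables (R : comPzRingType) (disp : Order.disp_t) (L : finTBLatticeType disp)
  (Fm : L -> lmodType R) (Fr : forall x y : L, Fm y -> Fm x).
Hypothesis FrD : forall x y, (x <= y)%O -> forall u v : Fm y, Fr x y (u + v) = Fr x y u + Fr x y v.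
Hypothesis FrZ : forall x y, (x <= y)%O -> forall (r : R) (u : Fm y), Fr x y (r *: u) = r *: Fr x y u.
Hypothesis Fr1 : forall x (u : Fm x), Fr x x u = u.
Hypothesis FrC : forall x y z, (x <= y)%O -> (y <= z)%O -> forall u : Fm z, Fr x y (Fr y z u) = Fr x z u.
Local Set Implicit Arguments.

Lemma Fr0 x y : (x <= y)%O -> Fr x y 0 = 0.
Proof. move=> le; apply/(addrI (Fr x y 0)); by rewrite -FrD // !addr0. Qed.
Lemma FrN x y : (x <= y)%O -> forall u : Fm y, Fr x y (- u) = - Fr x y u.
Proof. move=> le u; apply/(addrI (Fr x y u)); by rewrite -FrD // !subrr Fr0. Qed.
Lemma Fr_sum x y (I : Type) (r : seq I) (P : pred I) (f : I -> Fm y) : (x <= y)%O ->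
  Fr x y (\sum_(i <- r | P i) f i) = \sum_(i <- r | P i) Fr x y (f i).
Proof. move=> le; exact: (big_morph (Fr x y) (FrD x y le) (Fr0 le)). Qed.
Lemma FrCid x y (u : Fm x) : x = y -> Fr x y (Fr y x u) = u.
Proof. by move=> e; rewrite FrC ?e // Fr1. Qed.

Section KS.
Variable k : {set L} -> L.
Hypothesis kmono : forall S S' : {set L}, S \subset S' -> (k S <= k S')%O.

Lemma kU1 (b : L) (S : {set L}) : (k S <= k (b |: S))%O.
Proof. by apply: kmono; apply: subsetUr. Qed.

Definition K (X : {set L}) := @BComplex R L X (fun S => Fm (k S)) (fun S S' => Fr (k S) (k S')).
Definition ch := forall S : {set L}, Fm (k S).
Definition dX X (c : ch) : ch := @bdiff R L (K X) c.

Lemma dE (X : {set L}) (c : ch) (S : {set L}) : dX X c S = \sum_(b in X :\: S) bsign S b *: Fr (k S) (k (b |: S)) (c (b |: S)).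
Proof. by []. Qed.

Definition cD (c c' : ch) : ch := fun S => c S + c' S.
Definition cN (c : ch) : ch := fun S => - c S.
Definition cZ (r : R) (c : ch) : ch := fun S => r *: c S.
Definition c0 : ch := fun S => 0.

Lemma dD (X : {set L}) (c c' : ch) (S : {set L}) : dX X (cD c c') S = dX X c S + dX X c' S.
Proof. by rewrite !dE -big_split; apply: eq_bigr => b _; rewrite /cD FrD ?kU1 // scalerDr. Qed.
Lemma dN (X : {set L}) (c : ch) (S : {set L}) : dX X (cN c) S = - dX X c S.
Proof. by rewrite !dE -sumrN; apply: eq_bigr => b _; rewrite /cN FrN ?kU1 // scalerN. Qed.
Lemma dZ (X : {set L}) (r : R) (c : ch) (S : {set L}) : dX X (cZ r c) S = r *: dX X c S.
Proof. by rewrite !dE scaler_sumr; apply: eq_bigr => b _; rewrite /cZ FrZ ?kU1 // !scalerA mulrC. Qed.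
Lemma d0 (X : {set L}) (S : {set L}) : dX X c0 S = 0.
Proof. by rewrite !dE; apply: big1 => b _; rewrite /c0 Fr0 ?kU1 // scaler0. Qed.
Lemma d_ext (X : {set L}) (c c' : ch) : (forall S, c S = c' S) -> forall S, dX X c S = dX X c' S.
Proof. by move=> e S; rewrite !dE; apply: eq_bigr => b _; rewrite e. Qed.

Lemma dd (X : {set L}) (c : ch) (S : {set L}) : dX X (dX X c) S = 0.
Proof.
rewrite dE.
have E : forall b, b \in X :\: S -> bsign S b *: Fr (k S) (k (b |: S)) (dX X c (b |: S)) =
  \sum_(b' in (X :\: S) :\ b) (bsign S b * bsign (b |: S) b') *:
      Fr (k S) (k (b' |: (b |: S))) (c (b' |: (b |: S))).
  move=> b bX; rewrite dE Fr_sum ?kU1 // scaler_sumr.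
  have -> : X :\: (b |: S) = (X :\: S) :\ b.
    by apply/setP => y; rewrite !inE negb_or andbA andbC andbA.
  apply: eq_bigr => b' _; by rewrite FrZ ?kU1 // FrC ?kU1 // scalerA.
rewrite (eq_bigr _ E); apply: sum_antisym => b b' bX b'X bb'.
have -> : b |: (b' |: S) = b' |: (b |: S) by rewrite setUCA.
move: bX b'X; rewrite !inE => /andP[bS _] /andP[b'S _].
rewrite bsign_swap 1?eq_sym //; exact: scaleNr.
Qed.

Definition kc (X : {set L}) n (c : ch) := @is_kchain R L (K X) n c.
Definition cyc (X : {set L}) n (c : ch) := @is_cycle R L (K X) n c.
Definition bnd (X : {set L}) n (c : ch) := @is_boundary R L (K X) n c.
Definition hmg (X : {set L}) n (c c' : ch) := @homologous R L (K X) n c c'.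

Lemma kcE X n c : kc X n c <-> forall S : {set L}, ~~ ((S \subset X) && (#|S| == n)) -> c S = 0.
Proof. by []. Qed.
Lemma cycE X n c : cyc X n c <-> kc X n c /\ forall S : {set L}, dX X c S = 0.
Proof. by []. Qed.
Lemma bndE X n c : bnd X n c <-> exists b, kc X n.+1 b /\ forall S : {set L}, c S = dX X b S.
Proof. by []. Qed.
Lemma hmgE X n c c' : hmg X n c c' <-> bnd X n (cD c (cN c')).
Proof. by []. Qed.

Lemma kc0 X n : kc X n c0. Proof. by []. Qed.
Lemma kc_ext X n c c' : (forall S : {set L}, c S = c' S) -> kc X n c -> kc X n c'.
Proof. by move=> e h S hS; rewrite -e h. Qed.
Lemma kcD X n c c' : kc X n c -> kc X n c' -> kc X n (cD c c').
Proof. by move=> h h' S hS; rewrite /cD h ?h' ?addr0. Qed.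
Lemma kcN X n c : kc X n c -> kc X n (cN c).
Proof. by move=> h S hS; rewrite /cN h ?oppr0. Qed.
Lemma kcZ X n r c : kc X n c -> kc X n (cZ r c).
Proof. by move=> h S hS; rewrite /cZ h ?scaler0. Qed.
Lemma kc_d X n c : kc X n.+1 c -> kc X n (dX X c).
Proof.
move=> h S hS; rewrite dE; apply: big1 => b; rewrite inE => /andP[bS bX].
rewrite h ?Fr0 ?kU1 ?scaler0 //; apply: contra hS => /andP[sub /eqP cd].
rewrite (subset_trans (subsetUr _ _) sub) /=.
by move: cd; rewrite cardsU1 bS /= add1n => -[->].
Qed.

Lemma bnd_ext X n c c' : (forall S : {set L}, c S = c' S) -> bnd X n c -> bnd X n c'.
Proof. by move=> e /bndE [b [hb eb]]; apply/bndE; exists b; split => // S; rewrite -e. Qed.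
Lemma bnd0 X n : bnd X n c0.
Proof. by apply/bndE; exists c0; split => // S; rewrite d0. Qed.
Lemma bndD X n c c' : bnd X n c -> bnd X n c' -> bnd X n (cD c c').
Proof.
move=> /bndE [b [hb eb]] /bndE [b' [hb' eb']]; apply/bndE; exists (cD b b'); split; first exact: kcD.
by move=> S; rewrite dD /cD eb eb'.
Qed.
Lemma bndN X n c : bnd X n c -> bnd X n (cN c).
Proof.
move=> /bndE [b [hb eb]]; apply/bndE; exists (cN b); split; first exact: kcN.
by move=> S; rewrite dN /cN eb.
Qed.
Lemma bndZ X n r c : bnd X n c -> bnd X n (cZ r c).
Proof.
move=> /bndE [b [hb eb]]; apply/bndE; exists (cZ r b); split; first exact: kcZ.
by move=> S; rewrite dZ /cZ eb.
Qed.
Lemma bnd_d X n c : kc X n.+1 c -> bnd X n (dX X c).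
Proof. by move=> h; apply/bndE; exists c. Qed.

Lemma hmg_ext X n c c' e e' : (forall S : {set L}, c S = e S) -> (forall S : {set L}, c' S = e' S) ->
  hmg X n c c' -> hmg X n e e'.
Proof. by move=> h h'; apply: bnd_ext => S; rewrite /chainD /chainN h h'. Qed.
Lemma hmg_refl X n c : hmg X n c c.
Proof. by apply: (bnd_ext _ (bnd0 X n)) => S; rewrite /chainD /chainN /chain0 /cD /cN /c0 subrr. Qed.
Lemma hmg_sym X n c c' : hmg X n c c' -> hmg X n c' c.
Proof. by move/bndN; apply: bnd_ext => S; rewrite /chainD /chainN /chain0 /cD /cN opprD opprK addrC. Qed.
Lemma hmg_trans X n c c' c'' : hmg X n c c' -> hmg X n c' c'' -> hmg X n c c''.
Proof.
move=> h h'; apply: (bnd_ext _ (bndD h h')) => S.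
by rewrite /chainD /chainN /chain0 /cD /cN addrA subrK.
Qed.
Lemma hmg_bnd X n c c' : bnd X n c -> (forall S : {set L}, c' S = 0) -> hmg X n c c'.
Proof. by move=> h e; apply: (bnd_ext _ h) => S; rewrite /chainD /chainN /chain0 /cD /cN e oppr0 addr0. Qed.
Lemma bnd_hmg0 X n c : hmg X n c c0 -> bnd X n c.
Proof. by apply: bnd_ext => S; rewrite /chainD /chainN /chain0 /cD /cN /c0 oppr0 addr0. Qed.

Section Sub.
Variables (X Y : {set L}).
Hypothesis XY : X \subset Y.

Lemma kc_sub n c : kc X n c -> kc Y n c.
Proof.
move=> h S hS; apply: h; apply: contra hS => /andP[sub ->].
by rewrite (subset_trans sub XY).
Qed.
Lemma d_sub n c : kc X n c -> forall S : {set L}, dX Y c S = dX X c S.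
Proof.
move=> h S; rewrite !dE (big_mkcond (fun b => b \in Y :\: S)) (big_mkcond (fun b => b \in X :\: S)).
apply: eq_bigr => b _; rewrite !inE.
case: (boolP (b \in S)) => bS //=.
case: (boolP (b \in X)) => bX; first by rewrite (subsetP XY _ bX).
case: (b \in Y) => //; rewrite h ?Fr0 ?kU1 ?scaler0 //.
by rewrite subUset sub1set (negbTE bX).
Qed.
Lemma bnd_sub n c : bnd X n c -> bnd Y n c.
Proof.
move=> /bndE [b [hb eb]]; apply/bndE; exists b; split; first exact: kc_sub.
by move=> S; rewrite eb (d_sub hb).
Qed.
Lemma cyc_sub n c : cyc X n c -> cyc Y n c.
Proof.
move=> /cycE [h e]; apply/cycE; split; first exact: kc_sub.
by move=> S; rewrite (d_sub h).
Qed.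
Lemma cyc_sup n c : cyc Y n c -> kc X n c -> cyc X n c.
Proof. by move=> /cycE [h e] h'; apply/cycE; split => // S; rewrite -(d_sub h'). Qed.
End Sub.

Lemma hmgD X n c1 c1' c2 c2' : hmg X n c1 c1' -> hmg X n c2 c2' -> hmg X n (cD c1 c2) (cD c1' c2').
Proof.
move=> h1 h2; apply: (bnd_ext _ (bndD h1 h2)) => S.
by rewrite /chainD /chainN /cD opprD addrACA.
Qed.
Lemma hmgN X n c c' : hmg X n c c' -> hmg X n (cN c) (cN c').
Proof.
move=> h; apply: (bnd_ext _ (bndN h)) => S.
by rewrite /chainD /chainN /cN opprD.
Qed.
Lemma hmgZ X n r c c' : hmg X n c c' -> hmg X n (cZ r c) (cZ r c').
Proof.
move=> h; apply: (bnd_ext _ (bndZ r h)) => S.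
by rewrite /chainD /chainN /cZ scalerDr scalerN.
Qed.

Lemma cycD X n c c' : cyc X n c -> cyc X n c' -> cyc X n (cD c c').
Proof.
move=> /cycE [h e] /cycE [h' e']; apply/cycE; split; first exact: kcD.
by move=> S; rewrite dD e e' addr0.
Qed.
Lemma cycZ X n r c : cyc X n c -> cyc X n (cZ r c).
Proof.
move=> /cycE [h e]; apply/cycE; split; first exact: kcZ.
by move=> S; rewrite dZ e scaler0.
Qed.
Lemma bnd_hmg X n c : bnd X n c -> hmg X n c c0.
Proof. by move=> h; apply: hmg_bnd. Qed.

Lemma kc_minus X n c (x : L) : kc X n c -> (forall S : {set L}, x \in S -> c S = 0) -> kc (X :\ x) n c.
Proof.
move=> h hx S hS; case: (boolP (x \in S)) => xS; first exact: hx.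
apply: h; apply: contra hS => /andP[sub ->]; rewrite andbT.
apply/subsetP => u uS; rewrite !inE (subsetP sub _ uS) andbT.
by apply: contraNneq xS => <-.
Qed.

Lemma setD1U1 (b y : L) (T : {set L}) : b != y -> y \notin T -> (b |: (y |: T)) :\ y = b |: T.
Proof.
move=> bny yT; apply/setP => u; rewrite !inE.
case: (u =P y) => [->|] /=; first by rewrite (negbTE yT) orbF eq_sym (negbTE bny).
by [].
Qed.

Lemma setD1_id (y : L) (S : {set L}) : y \notin S -> S :\ y = S.
Proof.
by move=> yS; apply/setP => u; rewrite !inE; case: (u =P y) => // ->; rewrite (negbTE yS).
Qed.

Definition QI (Y X : {set L}) := forall n,
  (forall z, cyc X n z -> exists w, cyc Y n w /\ hmg X n z w) /\
  (forall w, kc Y n w -> bnd X n w -> bnd Y n w).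

Section Step.
Variables (X : {set L}) (x y : L).
Hypotheses (xX : x \in X) (yX : y \in X) (xy : x != y).
Hypothesis red : forall T : {set L}, x \in T -> k (y |: T) = k T.

Lemma kSy (S : {set L}) : x \in S -> k S = k (S :\ y).
Proof.
move=> xS; case: (boolP (y \in S)) => yS; last by rewrite setD1_id.
by rewrite -{1}(setD1K yS) red // !inE xS xy.
Qed.

Definition hh (c : ch) : ch := fun S =>
  if (x \in S) && (y \in S) then bsign (S :\ y) y *: Fr (k S) (k (S :\ y)) (c (S :\ y)) else 0.

Lemma hh_ext (c c' : ch) : (forall S : {set L}, c S = c' S) -> forall S : {set L}, hh c S = hh c' S.
Proof. by move=> e S; rewrite /hh e. Qed.

Lemma kc_hh n (c : ch) : kc X n c -> kc X n.+1 (hh c).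
Proof.
move=> h S hS; rewrite /hh; case: ifP => // /andP[xS yS].
rewrite h ?Fr0 ?scaler0 //; first by rewrite (kSy xS).
apply: contra hS => /andP[sub /eqP cd].
rewrite -(setD1K yS) subUset sub1set yX sub /=.
by rewrite cardsU1 setD11 cd.
Qed.

Lemma caseB (c : ch) (S : {set L}) : x \in S -> y \notin S -> dX X (hh c) S + hh (dX X c) S = c S.
Proof.
move=> xS yS; rewrite {2}/hh (negbTE yS) andbF addr0 dE.
have yXS : y \in X :\: S by rewrite inE yS yX.
rewrite (big_setD1 y yXS) /= big1 ?addr0.
  rewrite /hh setU11 inE xS orbT /= setU1K // FrZ ?kU1 // scalerA.
  by rewrite bsign_sq scale1r FrCid // red.
move=> b; rewrite !inE => /andP[bny _]; rewrite /hh !inE (negbTE yS) orbF.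
by rewrite [y == b]eq_sym (negbTE bny) andbF Fr0 ?kU1 // scaler0.
Qed.

Lemma caseA (c : ch) (T : {set L}) : x \in T -> y \notin T -> dX X (hh c) (y |: T) + hh (dX X c) (y |: T) = c (y |: T).
Proof.
move=> xT yT.
have e3 := red xT.
have l1 : (k (y |: T) <= k T)%O by rewrite e3.
have l2 : (k T <= k (y |: T))%O by rewrite e3.
rewrite {2}/hh setU11 inE xT orbT /= setU1K // dE.
have yXT : y \in X :\: T by rewrite inE yT yX.
rewrite [X in bsign T y *: Fr _ _ X]dE (big_setD1 y yXT) /= FrD //.
rewrite scalerDr FrZ // FrCid // scalerA bsign_sq scale1r.
rewrite addrCA -[RHS]addr0; congr (_ + _).
have -> : (X :\: T) :\ y = X :\: (y |: T).
  by apply/setP => u; rewrite !inE negb_or andbA.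
rewrite Fr_sum // scaler_sumr -big_split /=; apply: big1 => b.
rewrite inE => /andP[]; rewrite inE negb_or => /andP[bny bT] bX.
have bny' : b != y by move: bny; rewrite inE.
have l3 : (k (y |: T) <= k (b |: (y |: T)))%O by apply: kU1.
have l4 : (k (b |: (y |: T)) <= k (b |: T))%O by rewrite setUCA red // !inE xT orbT.
have l5 : (k T <= k (b |: T))%O by apply: kU1.
rewrite /hh !inE xT eqxx !orbT /= setD1U1 //.
rewrite FrZ // FrC // FrZ // FrC // !scalerA -scalerDl.
rewrite (bsignU1 R y bT) (bsignU1 R b yT) (sg_swap R bny').
set sy := sg R (enum_rank y < enum_rank b)%N.
have -> : sy * bsign T b * (- sy * bsign T y) + bsign T y * bsign T b = - (sy * sy - 1) * (bsign T y * bsign T b) by ring.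
by rewrite sg_sq subrr oppr0 mul0r scale0r.
Qed.


Lemma homot (c : ch) (S : {set L}) : x \in S -> dX X (hh c) S + hh (dX X c) S = c S.
Proof.
move=> xS; case: (boolP (y \in S)) => yS; last exact: caseB.
rewrite -(setD1K yS); apply: caseA; last by rewrite setD11.
by rewrite !inE xS xy.
Qed.

Lemma hh_zero (c : ch) : (forall S : {set L}, x \in S -> c S = 0) -> forall S : {set L}, hh c S = 0.
Proof.
move=> hc S; rewrite /hh; case: ifP => // /andP[xS yS].
rewrite hc ?Fr0 ?scaler0 //; first by rewrite (kSy xS).
by rewrite !inE xS xy.
Qed.

Lemma QI1 : QI (X :\ x) X.
Proof.
have sX := subD1set X x.
move=> n; split.
- move=> z /cycE [zk zd].
  pose w := cD z (cN (dX X (hh z))).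
  have hk : kc X n.+1 (hh z) := kc_hh zk.
  have wk : kc X n w by apply: kcD => //; apply: kcN; apply: kc_d.
  exists w; split.
    apply: (cyc_sup sX).
      apply/cycE; split => // S.
      by rewrite dD dN dd zd oppr0 addr0.
    apply: kc_minus => // S xS; rewrite /w /cD /cN.
    have := homot z xS; rewrite (hh_zero (c := dX X z)) ?addr0; last by move=> S' _; rewrite zd.
    by move=> ->; rewrite subrr.
  apply: (bnd_ext _ (bnd_d hk)) => S.
  by rewrite /chainD /chainN /w /cD /cN opprD opprK addrA subrr add0r.
- move=> w wk /bndE [b [bk eb]].
  have wk' : kc X n w := kc_sub sX wk.
  have wx : forall S : {set L}, x \in S -> w S = 0.
    move=> S xS; apply: wk; apply: contraT; rewrite negbK => /andP[sub _].
    by move: (subsetP sub x xS); rewrite !inE eqxx.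
  pose b' := cD b (cN (cD (dX X (hh b)) (hh w))).
  have bk' : kc (X :\ x) n.+1 b'.
    apply: kc_minus.
      apply: kcD => //; apply: kcN; apply: kcD; last exact: kc_hh.
      by apply: kc_d; apply: kc_hh.
    move=> S xS; rewrite /b' /cD /cN (hh_ext eb) homot //.
    by rewrite subrr.
  apply/bndE; exists b'; split => // S.
  change (w S = dX (X :\ x) b' S); rewrite -(d_sub sX bk') /b'.
  rewrite dD dN dD dd add0r -(eb S) (@d_ext X _ c0) ?d0 ?oppr0 ?addr0 //.
  by move=> S'; rewrite hh_zero.
Qed.
End Step.

Lemma QI_refl X : QI X X.
Proof.
move=> n; split; last by [].
by move=> z hz; exists z; split => //; apply: hmg_refl.
Qed.

Lemma QI_trans (Z Y X : {set L}) : Z \subset Y -> Y \subset X -> QI Z Y -> QI Y X -> QI Z X.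
Proof.
move=> ZY YX h1 h2 n; have [a1 b1] := h1 n; have [a2 b2] := h2 n; split.
  move=> z hz; have [w [hw hzw]] := a2 z hz; have [v [hv hwv]] := a1 w hw.
  exists v; split => //; apply: hmg_trans hzw _.
  exact: (bnd_sub YX).
by move=> w wk wb; apply: b1 => //; apply: b2 => //; apply: (kc_sub ZY).
Qed.


Lemma QI_iter (Y : {set L}) : forall n (X : {set L}), #|X :\: Y| = n -> Y \subset X ->
  (forall x, x \in X -> x \notin Y -> exists2 y, y \in Y & forall T : {set L}, x \in T -> k (y |: T) = k T) ->
  QI Y X.
Proof.
elim=> [|n IH] X cX YX hX.
  have -> : X = Y; last exact: QI_refl.
  apply/eqP; rewrite eqEsubset YX andbT; apply/subsetP => u uX.
  apply: contraT => uY; move: cX => /eqP; rewrite cards_eq0 => /eqP e.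
  by move: (in_set0 u); rewrite -e inE uY uX.
have [x xXY] : exists x, x \in X :\: Y.
  by apply/set0Pn; rewrite -card_gt0 cX.
move: (xXY); rewrite inE => /andP[xY xX].
have YX' : Y \subset X :\ x.
  apply/subsetP => u uY; rewrite !inE (subsetP YX _ uY) andbT.
  by apply: contraNneq xY => <-.
apply: (QI_trans YX' (subD1set X x)).
  apply: IH => //.
    have -> : (X :\ x) :\: Y = (X :\: Y) :\ x.
      by apply/setP => u; rewrite !inE andbCA.
    by move: cX; rewrite (cardsD1 x) xXY add1n => -[].
  by move=> u /setD1P [_ uX]; apply: hX.
have [y yY red] := hX x xX xY.
have xy : x != y by apply: contraNneq xY => ->.
exact: (@QI1 X x y (subsetP YX _ yY) xy red).
Qed.

Lemma QI_hmg (Y X : {set L}) n (c c' : ch) : QI Y X -> kc Y n c -> kc Y n c' -> hmg X n c c' -> hmg Y n c c'.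
Proof. by move=> q hc hc' h; have [_ b] := q n; apply: b => //; apply: kcD => //; exact: kcN. Qed.
End KS.

Section Spec.
Variables (rk : L -> nat) (a : L).
Hypotheses (geo : geometric rk) (aA : a \in atoms rk).

Lemma rk_lt (x y : L) : (x < y)%O -> (rk x < rk y)%N.
Proof.
have [[_ gr] _ _] := geo.
suff H : forall n (x y : L), (#|[set z | (x < z)%O && (z <= y)%O]| <= n)%N -> (x < y)%O -> (rk x < rk y)%N.
  by move=> xy; apply: (H _ x y (leqnn _) xy).
elim=> [|n IH] {}x {}y hc xy.
  have yin : y \in [set z | (x < z)%O && (z <= y)%O] by rewrite inE xy lexx.
  by move: hc; rewrite leqn0 cards_eq0 => /eqP e; move: yin; rewrite e inE.
case: (boolP (covers x y)) => cov; first by rewrite (gr _ _ cov).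
move: cov; rewrite /covers xy /= negb_forall => /existsP [z]; rewrite negbK => /andP [xz zy].
have c1 : (#|[set w | (x < w)%O && (w <= z)%O]| < #|[set w | (x < w)%O && (w <= y)%O]|)%N.
  apply: proper_card; apply/properP; split.
    apply/subsetP => w; rewrite !inE => /andP[-> wz] /=; exact: le_trans wz (ltW zy).
  by exists y; rewrite !inE ?xy ?lexx //= (lt_geF zy).
have c2 : (#|[set w | (z < w)%O && (w <= y)%O]| < #|[set w | (x < w)%O && (w <= y)%O]|)%N.
  apply: proper_card; apply/properP; split.
    apply/subsetP => w; rewrite !inE => /andP[zw ->]; rewrite andbT; exact: lt_trans zw.
  by exists z; rewrite !inE ?xz ?(ltW zy) //= ltxx.
apply: (@ltn_trans (rk z)); apply: IH => //; rewrite -ltnS; exact: leq_trans hc.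
Qed.

Lemma atom1 (b : L) : b \in atoms rk -> rk b = 1%N.
Proof. by rewrite inE => /eqP. Qed.

Lemma covers_join (b : L) : b \in atoms rk -> b != a -> covers a (a `|` b)%O.
Proof.
move=> bA ba; have [_ _ sm] := geo.
have ra := atom1 aA; have rb := atom1 bA.
have aab : (a < a `|` b)%O.
  rewrite lt_def leUl andbT; apply/negP => /eqP e.
  have : (b < a)%O by rewrite lt_def eq_sym ba /= -e leUr.
  by move/rk_lt; rewrite ra rb ltnn.
have r2 : (rk (a `|` b)%O <= 2)%N.
  by move: (sm a b); rewrite ra rb => h; apply: leq_trans h; apply: leq_addr.
rewrite /covers aab /=; apply/forallP => z; apply/negP => /andP[az zab].
move: (rk_lt az) (rk_lt zab); rewrite ra => h1 h2.
by move: (leq_ltn_trans h1 h2) (leq_trans (leq_ltn_trans h1 h2) r2).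
Qed.

Lemma cov_atom (c : L) : covers a c -> exists2 b, b \in atoms rk :\ a & (b <= c)%O.
Proof.
have [_ at_ _] := geo.
move=> /andP[ac _]; have [S [SA cE]] := at_ c.
have nsub : ~~ (S \subset [set a]).
  apply/negP => sub.
  have : (c <= a)%O.
    rewrite cE; apply/joinsP => y yS; move: (subsetP sub y yS); rewrite inE => /eqP ->.
    exact: lexx.
  by move=> ca; move: (lt_le_trans ac ca); rewrite ltxx.
have [b bS ba] := subsetPn nsub.
exists b; first by apply/setD1P; split; [move: ba; rewrite inE | exact: (subsetP SA _ bS)].
by rewrite cE; apply: joins_sup.
Qed.

Definition J : {set L} -> L := fun S => bjoin S.
Definition Ka : {set L} -> L := fun S => (a `|` bjoin S)%O.

Lemma Jmono : forall S S' : {set L}, S \subset S' -> (J S <= J S')%O.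
Proof. by move=> S S' h; apply: le_joins. Qed.
Lemma Kamono : forall S S' : {set L}, S \subset S' -> (Ka S <= Ka S')%O.
Proof. by move=> S S' h; apply: leU2 => //; apply: le_joins. Qed.

Lemma bjoinU1 (b : L) (S : {set L}) : bjoin (b |: S) = (b `|` bjoin S)%O.
Proof. by rewrite /bjoin joins_setU big_set1. Qed.
Lemma JaE (S : {set L}) : J (a |: S) = Ka S.
Proof. by rewrite /J /Ka bjoinU1. Qed.
Lemma JaE' (S : {set L}) : a \in S -> J S = Ka (S :\ a).
Proof. by move=> aS; rewrite -JaE setD1K. Qed.
Lemma bjoin_sup (b : L) (S : {set L}) : b \in S -> (b <= bjoin S)%O.
Proof. by move=> bS; apply: joins_sup. Qed.
Lemma KaU1 (y : L) (T : {set L}) : (y <= Ka T)%O -> Ka (y |: T) = Ka T.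
Proof. by move=> h; rewrite /Ka bjoinU1 joinCA join_r. Qed.

Local Notation A := (atoms rk).
Local Notation A' := (atoms rk :\ a).
Local Notation Cov := [set y | covers a y].
Local Notation E := (atoms rk :\ a :|: [set y | covers a y]).

Lemma QIr : QI Ka Cov E.
Proof.
apply: (QI_iter Kamono (erefl _)); first exact: subsetUr.
move=> x /setUP [xA' | xC] nC; last by rewrite xC in nC.
move: xA' => /setD1P [xa xA].
exists (a `|` x)%O; first by rewrite inE covers_join.
move=> T xT; apply: KaU1; apply: leU2 => //; exact: bjoin_sup.
Qed.

Lemma QIq : QI Ka A' E.
Proof.
apply: (QI_iter Kamono (erefl _)); first exact: subsetUl.
move=> x /setUP [xA' | xC] nC; first by rewrite xA' in nC.
move: xC; rewrite inE => /cov_atom [b bA' bx].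
exists b => // T xT; apply: KaU1.
apply: le_trans bx _; apply: le_trans (bjoin_sup xT) _; exact: leUr.
Qed.

Definition sig (S : {set L}) : R := psign R (fun u => (enum_rank a < enum_rank u)%N) S.
Definition pm (c : ch J) : ch Ka := fun S =>
  if a \in S then 0 else sig S *: Fr (Ka S) (J (a |: S)) (c (a |: S)).
Definition lm (u : ch Ka) : ch J := fun S =>
  if a \in S then sig (S :\ a) *: Fr (J S) (Ka (S :\ a)) (u (S :\ a)) else 0.
Definition tm (u : ch Ka) : ch J := fun S =>
  if a \in S then 0 else bsign S a *: Fr (J S) (J (a |: S)) (lm u (a |: S)).

Lemma sig_sq (S : {set L}) : sig S * sig S = 1.
Proof. exact: (psign_sq R). Qed.
Lemma sigU1 (b : L) (S : {set L}) : b \notin S -> sig (b |: S) = sg R (enum_rank a < enum_rank b)%N * sig S.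
Proof. exact: (psignU1 R). Qed.

Lemma leJU (b : L) (S : {set L}) : (J S <= J (b |: S))%O.
Proof. exact: Jmono (subsetUr _ _). Qed.
Lemma leKU (b : L) (S : {set L}) : (Ka S <= Ka (b |: S))%O.
Proof. exact: Kamono (subsetUr _ _). Qed.
Lemma leJa (S : {set L}) : (J (a |: S) <= Ka S)%O. Proof. by rewrite JaE. Qed.
Lemma leaJ (S : {set L}) : (Ka S <= J (a |: S))%O. Proof. by rewrite JaE. Qed.

Lemma lmE (u : ch Ka) (T : {set L}) : a \notin T -> lm u (a |: T) = sig T *: Fr (J (a |: T)) (Ka T) (u T).
Proof. by move=> aT; rewrite /lm setU11 setU1K. Qed.

Lemma lm_pm (c : ch J) (S : {set L}) : a \in S -> lm (pm c) S = c S.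
Proof.
move=> aS; rewrite -(setD1K aS); move: (S :\ a) (negbT (setD11 a S)) => T aT.
rewrite lmE // /pm (negbTE aT) FrZ ?leJa // scalerA sig_sq scale1r.
by rewrite FrCid // JaE.
Qed.

Lemma pm_lm (u : ch Ka) (S : {set L}) : a \notin S -> pm (lm u) S = u S.
Proof.
move=> aS; rewrite /pm (negbTE aS) lmE // FrZ ?leaJ // scalerA sig_sq scale1r.
by rewrite FrCid // JaE.
Qed.

Lemma pm0 n (c : ch J) : kc A' n c -> forall S : {set L}, pm c S = 0.
Proof.
move=> h S; rewrite /pm; case: ifP => // aS.
rewrite h ?Fr0 ?scaler0 ?leaJ //; apply/negP => /andP[sub _].
by move: (subsetP sub a (setU11 a S)); rewrite !inE eqxx.
Qed.

Lemma kc_pm n (c : ch J) : kc A n.+1 c -> kc A' n (pm c).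
Proof.
move=> h S hS; rewrite /pm; case: ifP => // /negbT aS.
rewrite h ?Fr0 ?scaler0 ?leaJ //; apply: contra hS => /andP[sub /eqP cd].
move: cd; rewrite cardsU1 aS /= add1n => -[->]; rewrite eqxx andbT.
apply/subsetP => u uS; apply/setD1P; split; last exact: (subsetP sub u (setU1r a uS)).
by apply: contraNneq aS => <-.
Qed.

Lemma kc_lm n (u : ch Ka) : kc A' n u -> kc A n.+1 (lm u).
Proof.
move=> h S hS; rewrite /lm; case: ifP => // aS.
rewrite h ?Fr0 ?scaler0 //; first by rewrite JaE' // lexx.
apply: contra hS => /andP[sub /eqP cd].
rewrite -(setD1K aS) subUset sub1set aA /=.
rewrite cardsU1 setD11 cd eqxx andbT.
by apply: subset_trans sub (subD1set _ _).
Qed.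

Lemma kc_tm n (u : ch Ka) : kc A' n u -> kc A' n (tm u).
Proof.
move=> h S hS; rewrite /tm; case: ifP => // /negbT aS.
rewrite lmE // h ?Fr0 ?scaler0 ?leJa ?leaJ ?leJU //.
by rewrite Fr0 ?scaler0 ?leJU.
Qed.

Lemma leJK (S : {set L}) : (J S <= Ka S)%O.
Proof. exact: leUr. Qed.

Lemma leJaU (b : L) (S : {set L}) : (J (a |: S) <= J (a |: (b |: S)))%O.
Proof. by apply: Jmono; apply/subsetP => u; rewrite !inE => /orP[->|->]; rewrite ?orbT. Qed.

Lemma AaS (S : {set L}) : A :\: (a |: S) = A' :\: S.
Proof. by apply/setP => u; rewrite !inE negb_or; case: (u == a); case: (u \in S). Qed.

Lemma sign_swap_a (b : L) (S : {set L}) : a \notin S -> b \notin S ->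
  bsign (a |: S) b * sig (b |: S) = sig S * bsign S b.
Proof.
move=> aS bS; rewrite (bsignU1 R b aS) sigU1 //.
set s := sg R _.
have -> : s * bsign S b * (s * sig S) = (s * s) * (sig S * bsign S b) by ring.
by rewrite sg_sq mul1r.
Qed.

Lemma d_pm (c : ch J) (S : {set L}) : dX A' (pm c) S = pm (dX A c) S.
Proof.
rewrite /pm; case: (boolP (a \in S)) => aS.
  rewrite dE; apply: big1 => b _.
  by rewrite (setU1r b aS) Fr0 ?leKU // scaler0.
rewrite !dE Fr_sum ?leaJ // scaler_sumr AaS; apply: eq_bigr => b /setDP [bA' bS].
move: bA' => /setD1P [ba bA].
have abS : a \notin b |: S by rewrite !inE negb_or eq_sym ba aS.
rewrite (negbTE abS) [b |: (a |: S)]setUCA.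
rewrite FrZ ?leKU // FrC ?leKU ?leaJ // FrZ ?leaJ // FrC ?leaJ ?leJaU //.
rewrite !scalerA sigU1 // (bsignU1 R b aS); congr (_ *: _); ring.
Qed.

Lemma d_lm (u : ch Ka) (S : {set L}) : dX A (lm u) S = cD (lm (dX A' u)) (tm u) S.
Proof.
rewrite /cD; case: (boolP (a \in S)) => aS.
  rewrite -(setD1K aS); move: (S :\ a) (negbT (setD11 a S)) => T aT.
  rewrite /tm setU11 addr0 lmE // !dE Fr_sum ?leJa // scaler_sumr AaS.
  apply: eq_bigr => b /setDP [bA' bS]; move: bA' => /setD1P [ba bA].
  have abS : a \notin b |: T by rewrite !inE negb_or eq_sym ba aT.
  rewrite [b |: (a |: T)]setUCA lmE //.
  rewrite FrZ ?leJaU // FrC ?leJaU ?leJa // FrZ ?leJa // FrC ?leJa ?leKU //.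
  by rewrite !scalerA sign_swap_a.
rewrite /lm (negbTE aS) add0r /tm (negbTE aS) dE.
have aAS : a \in A :\: S by rewrite inE aS aA.
rewrite (big_setD1 a aAS) /= big1 ?addr0 //.
move=> b; rewrite !inE => /andP[ba _].
by rewrite (negbTE aS) orbF [a == b]eq_sym (negbTE ba) Fr0 ?leJU // scaler0.
Qed.

Lemma tmE (u : ch Ka) (S : {set L}) :
  tm u S = if a \in S then 0 else (bsign S a * sig S) *: Fr (J S) (Ka S) (u S).
Proof.
rewrite /tm; case: ifP => // /negbT aS.
by rewrite lmE // FrZ ?leJU // FrC ?leJU ?leJa // scalerA.
Qed.

Lemma tm_ext (u u' : ch Ka) : (forall S : {set L}, u S = u' S) -> forall S : {set L}, tm u S = tm u' S.
Proof. by move=> e S; rewrite !tmE e. Qed.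
Lemma tmD (u u' : ch Ka) (S : {set L}) : tm (cD u u') S = cD (tm u) (tm u') S.
Proof. by rewrite /cD !tmE; case: ifP; rewrite ?addr0 // FrD ?leJK // scalerDr. Qed.
Lemma tmN (u : ch Ka) (S : {set L}) : tm (cN u) S = cN (tm u) S.
Proof. by rewrite /cN !tmE; case: ifP; rewrite ?oppr0 // FrN ?leJK // scalerN. Qed.
Lemma tmZ r (u : ch Ka) (S : {set L}) : tm (cZ r u) S = cZ r (tm u) S.
Proof. by rewrite /cZ !tmE; case: ifP; rewrite ?scaler0 // FrZ ?leJK // !scalerA mulrC. Qed.

Lemma pm_ext (c c' : ch J) : (forall S : {set L}, c S = c' S) -> forall S : {set L}, pm c S = pm c' S.
Proof. by move=> e S; rewrite /pm e. Qed.
Lemma pmD (c c' : ch J) (S : {set L}) : pm (cD c c') S = cD (pm c) (pm c') S.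
Proof. by rewrite /cD /pm; case: ifP; rewrite ?addr0 // FrD ?leaJ // scalerDr. Qed.
Lemma pmN (c : ch J) (S : {set L}) : pm (cN c) S = cN (pm c) S.
Proof. by rewrite /cN /pm; case: ifP; rewrite ?oppr0 // FrN ?leaJ // scalerN. Qed.
Lemma pmZ r (c : ch J) (S : {set L}) : pm (cZ r c) S = cZ r (pm c) S.
Proof. by rewrite /cZ /pm; case: ifP; rewrite ?scaler0 // FrZ ?leaJ // !scalerA mulrC. Qed.
Lemma lm_ext (u u' : ch Ka) : (forall S : {set L}, u S = u' S) -> forall S : {set L}, lm u S = lm u' S.
Proof. by move=> e S; rewrite /lm e. Qed.

Lemma sA'A : A' \subset A. Proof. exact: subD1set. Qed.
Lemma sA'E : A' \subset E. Proof. exact: subsetUl. Qed.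
Lemma sCE : Cov \subset E. Proof. exact: subsetUr. Qed.

Lemma lm_zero (u : ch Ka) : (forall S : {set L}, u S = 0) -> forall S : {set L}, lm u S = 0.
Proof.
move=> e S; rewrite /lm; case: ifP => // aS.
by rewrite e Fr0 ?scaler0 // JaE' // lexx.
Qed.

Lemma TauCyc n (u : ch Ka) : cyc A' n u -> cyc A' n (tm u) /\ bnd A n (tm u).
Proof.
move=> /cycE [hu du].
have e : forall S : {set L}, dX A (lm u) S = tm u S.
  by move=> S; rewrite d_lm /cD (lm_zero du) add0r.
have hb : bnd A n (tm u) := bnd_ext e (bnd_d (kc_lm hu)).
split => //; apply/cycE; split; first exact: kc_tm.
move=> S; rewrite -(d_sub Jmono sA'A (kc_tm hu)).
exact: (etrans (esym (d_ext A e S)) (dd Jmono A (lm u) S)).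
Qed.

Lemma TauBnd n (v : ch Ka) : kc A' n.+1 v -> bnd A' n (tm (dX A' v)).
Proof.
move=> hv; apply/bndE; exists (cN (tm v)); split; first by apply: kcN; apply: kc_tm.
move=> S; rewrite -(d_sub Jmono sA'A (kcN (kc_tm hv))) (dN Jmono).
have e2 := dd Jmono A (lm v) S.
rewrite (d_ext A (d_lm v)) (dD Jmono) d_lm /cD (lm_zero (dd Kamono A' v)) add0r in e2.
by apply/eqP; rewrite -addr_eq0 e2.
Qed.

Lemma TauHmg n (u1 u2 : ch Ka) : hmg A' n u1 u2 -> hmg A' n (tm u1) (tm u2).
Proof.
move=> /hmgE /bndE [v [hv ev]].
apply: (bnd_ext _ (TauBnd hv)) => S.
rewrite /chainD /chainN -(tm_ext ev) tmD /cD tmN //.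
Qed.

Lemma PHmg n (c1 c2 : ch J) : hmg A n.+1 c1 c2 -> hmg A' n (pm c1) (pm c2).
Proof.
move=> /hmgE /bndE [b [hb eb]].
apply/hmgE/bndE; exists (pm b); split; first exact: kc_pm.
move=> S; rewrite d_pm -(pm_ext eb) pmD /cD pmN //.
Qed.

Definition r0 (c : ch J) : ch J := fun S => if a \in S then 0 else c S.

Lemma kc_r0 n (c : ch J) : kc A n c -> kc A' n (r0 c).
Proof. by move=> h; apply: kc_minus => [S hS|S aS]; rewrite /r0; [case: ifP => //; rewrite h | rewrite aS]. Qed.

Lemma decomp (b : ch J) (S : {set L}) :
  dX A b S = cD (cD (lm (pm (dX A b))) (tm (pm b))) (dX A (r0 b)) S.
Proof.
have sp : forall S : {set L}, b S = cD (lm (pm b)) (r0 b) S.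
  move=> T; rewrite /cD /r0; case: (boolP (a \in T)) => aT.
    by rewrite lm_pm // addr0.
  by rewrite /lm (negbTE aT) add0r.
rewrite (d_ext A sp) (dD Jmono) d_lm /cD (lm_ext (d_pm b)) //.
Qed.

Definition wp n (w : ch Ka) : ch Ka :=
  epsilon (inhabits (c0 Ka)) (fun w' => cyc A' n w' /\ hmg E n w w').
Definition alpha_m n (w : ch Ka) : ch J := tm (wp n w).
Definition delta_m n (z : ch J) : ch Ka :=
  epsilon (inhabits (c0 Ka)) (fun w => cyc Cov n w /\ hmg E n (pm z) w).

Lemma wp_spec n (w : ch Ka) : cyc Cov n w -> cyc A' n (wp n w) /\ hmg E n w (wp n w).
Proof.
move=> h.
have ex : exists w', cyc A' n w' /\ hmg E n w w'.
  have [q _] := QIq n; apply: q; exact: (cyc_sub Kamono sCE h).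
exact: (epsilon_spec (inhabits (c0 Ka)) (fun w' => cyc A' n w' /\ hmg E n w w') ex).
Qed.

Lemma delta_spec n (z : ch J) : cyc A n.+1 z ->
  cyc Cov n (delta_m n z) /\ hmg E n (pm z) (delta_m n z).
Proof.
move=> /cycE [hz dz].
have ex : exists w, cyc Cov n w /\ hmg E n (pm z) w.
  have [q _] := QIr n; apply: q; apply: (cyc_sub Kamono sA'E).
  apply/cycE; split; first exact: kc_pm.
  move=> S; rewrite d_pm /pm; case: ifP => // _.
  by rewrite dz Fr0 ?leaJ // scaler0.
exact: (epsilon_spec (inhabits (c0 Ka)) (fun w => cyc Cov n w /\ hmg E n (pm z) w) ex).
Qed.

Lemma hom_beta n : @hom_map R L (K J A') (K J A) n n (fun c => c).
Proof.
split.
- by move=> c h; apply: (cyc_sub Jmono sA'A).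
- by move=> c c' _ _ h; apply: (bnd_sub Jmono sA'A).
- by move=> c c' _ _; apply: (hmg_refl Jmono).
- by move=> r c _; apply: (hmg_refl Jmono).
Qed.

Lemma hom_delta n : @hom_map R L (K J A) (K Ka Cov) n.+1 n (delta_m n).
Proof.
split.
- by move=> c h; have [] := delta_spec h.
- move=> c c' hc hc' h.
  have [h1 e1] := delta_spec hc; have [h2 e2] := delta_spec hc'.
  have e3 : hmg E n (pm c) (pm c') := bnd_sub Kamono sA'E (PHmg h).
  apply: (QI_hmg QIr (proj1 h1) (proj1 h2)).
  exact (hmg_trans Kamono (hmg_sym Kamono e1) (hmg_trans Kamono e3 e2)).
- move=> c c' hc hc'.
  have hcc := cycD Jmono hc hc'.
  have [h1 e1] := delta_spec hcc; have [h2 e2] := delta_spec hc; have [h3 e3] := delta_spec hc'.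
  apply: (QI_hmg QIr (proj1 h1) (kcD (proj1 h2) (proj1 h3))).
  apply: (hmg_trans Kamono (hmg_sym Kamono e1)).
  apply: hmg_ext (hmgD Kamono e2 e3) => S //.
  exact: (esym (pmD c c' S)).
- move=> r c hc.
  have hcc := cycZ Jmono r hc.
  have [h1 e1] := delta_spec hcc; have [h2 e2] := delta_spec hc.
  apply: (QI_hmg QIr (proj1 h1) (kcZ r (proj1 h2))).
  apply: (hmg_trans Kamono (hmg_sym Kamono e1)).
  apply: hmg_ext (hmgZ Kamono r e2) => S //.
  exact: (esym (pmZ r c S)).
Qed.

Lemma hom_alpha n : @hom_map R L (K Ka Cov) (K J A') n n (alpha_m n).
Proof.
split.
- by move=> w h; exact: (TauCyc (proj1 (wp_spec h))).1.
- move=> w w' hw hw' h.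
  have [a1 e1] := wp_spec hw; have [a2 e2] := wp_spec hw'.
  have h' : hmg E n w w' := bnd_sub Kamono sCE h.
  apply: TauHmg; apply: (QI_hmg QIq (proj1 a1) (proj1 a2)).
  exact (hmg_trans Kamono (hmg_sym Kamono e1) (hmg_trans Kamono h' e2)).
- move=> w w' hw hw'.
  have hww := cycD Kamono hw hw'.
  have [a0 e0] := wp_spec hww; have [a1 e1] := wp_spec hw; have [a2 e2] := wp_spec hw'.
  have : hmg A' n (wp n (cD w w')) (cD (wp n w) (wp n w')).
    apply: (QI_hmg QIq (proj1 a0) (kcD (proj1 a1) (proj1 a2))).
    exact (hmg_trans Kamono (hmg_sym Kamono e0) (hmgD Kamono e1 e2)).
  move/TauHmg; apply: hmg_ext => S //.
  exact: tmD.
- move=> r w hw.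
  have hww := cycZ Kamono r hw.
  have [a0 e0] := wp_spec hww; have [a1 e1] := wp_spec hw.
  have : hmg A' n (wp n (cZ r w)) (cZ r (wp n w)).
    apply: (QI_hmg QIq (proj1 a0) (kcZ r (proj1 a1))).
    exact (hmg_trans Kamono (hmg_sym Kamono e0) (hmgZ Kamono r e1)).
  move/TauHmg; apply: hmg_ext => S //.
  exact: tmZ.
Qed.

Lemma ex1 n : @exact_at R L (K Ka Cov) (K J A') (K J A) n n n (alpha_m n) (fun c => c).
Proof.
move=> z hz; split.
- move=> /bnd_hmg0 /bndE [b [hb eb]].
  have pz0 : forall S : {set L}, pm (dX A b) S = 0.
    by move=> S; rewrite -(pm_ext eb) (pm0 (proj1 hz)).
  have hu : cyc A' n (pm b).
    apply/cycE; split; first exact: kc_pm.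
    by move=> S; rewrite d_pm pz0.
  have [q _] := QIr n; have [w [hw huw]] := q _ (cyc_sub Kamono sA'E hu).
  exists w; split => //.
  have [a1 e1] := wp_spec hw.
  have h1 : hmg A' n (wp n w) (pm b).
    apply: (QI_hmg QIq (proj1 a1) (proj1 hu)).
    exact (hmg_trans Kamono (hmg_sym Kamono e1) (hmg_sym Kamono huw)).
  apply: (hmg_trans Jmono (TauHmg h1)).
  apply/hmgE/bndE; exists (cN (r0 b)); split; first exact: (kcN (kc_r0 hb)).
  move=> S; rewrite -(d_sub Jmono sA'A (kcN (kc_r0 hb))) (dN Jmono) /cD /cN eb decomp /cD.
  by rewrite (lm_zero pz0) add0r opprD addrA subrr add0r.
- move=> [w [hw h]].
  exact (hmg_trans Jmono (hmg_sym Jmono (bnd_sub Jmono sA'A h))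
           (bnd_hmg (TauCyc (proj1 (wp_spec hw))).2)).
Qed.

Lemma ex2 n : @exact_at R L (K J A') (K J A) (K Ka Cov) n.+1 n.+1 n (fun c => c) (delta_m n).
Proof.
move=> z hz; have [h1 e1] := delta_spec hz; split.
- move=> h.
  have h2 : hmg E n (pm z) (c0 Ka) := hmg_trans Kamono e1 (bnd_sub Kamono sCE h).
  have := QI_hmg QIq (kc_pm (proj1 hz)) (fun _ _ => erefl) h2.
  move=> /bnd_hmg0 /bndE [v [hv ev]].
  have hl : kc A n.+2 (lm v) := kc_lm hv.
  pose w := cD z (cN (dX A (lm v))).
  have hw : cyc A n.+1 w.
    apply: (cycD Jmono hz); apply/cycE; split; first exact: (kcN (kc_d Jmono hl)).
    by move=> S; rewrite (dN Jmono) (dd Jmono) oppr0.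
  exists w; split.
    apply: (cyc_sup Jmono sA'A hw); apply: kc_minus; first exact: (proj1 hw).
    move=> S aS; rewrite /w /cD /cN d_lm /cD tmE aS addr0.
    have ev' : forall T : {set L}, dX A' v T = pm z T.
      by move=> T; rewrite -ev /chainD /chainN /cD /cN /c0 ?oppr0 ?addr0.
    by rewrite (lm_ext ev') lm_pm // subrr.
  apply/hmgE/bndE; exists (cN (lm v)); split; first exact: (kcN hl).
  by move=> S; rewrite (dN Jmono) /chainD /chainN /w /cD /cN addrAC subrr add0r.
- move=> [w [hw h]].
  have e2 : hmg A' n (pm z) (pm w) := PHmg (hmg_sym Jmono h).
  have e3 : hmg A' n (pm z) (c0 Ka) := hmg_ext (fun S => erefl) (pm0 (proj1 hw)) e2.
  apply: (QI_hmg QIr (proj1 h1) (fun _ _ => erefl)).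
  exact (hmg_trans Kamono (hmg_sym Kamono e1) (bnd_sub Kamono sA'E e3)).
Qed.

Lemma ex3 n : @exact_at R L (K J A) (K Ka Cov) (K J A') n.+1 n n (delta_m n) (alpha_m n).
Proof.
move=> w hw; have [a1 e1] := wp_spec hw; split.
- move=> /bnd_hmg0 /bndE [v [hv ev]].
  pose z := cD (lm (wp n w)) (cN v).
  have hz : cyc A n.+1 z.
    apply/cycE; split.
      by apply: kcD; [exact: kc_lm (proj1 a1) | exact: kcN (kc_sub sA'A hv)].
    move=> S; rewrite /z (dD Jmono) (dN Jmono) d_lm /cD (lm_zero (proj2 a1)) add0r.
    by rewrite (d_sub Jmono sA'A hv) -ev subrr.
  exists z; split => //.
  have [h1 e2] := delta_spec hz.
  apply: (QI_hmg QIr (proj1 h1) (proj1 hw)).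
  have e3 : forall S : {set L}, wp n w S = pm z S.
    move=> S; rewrite /z pmD /cD pmN /cN (pm0 hv) oppr0 addr0.
    case: (boolP (a \in S)) => aS; last by rewrite pm_lm.
    rewrite /pm aS (proj1 a1) //; apply/negP => /andP[sub _].
    by move: (subsetP sub a aS); rewrite !inE eqxx.
  have e4 : hmg E n (pm z) w := hmg_ext e3 (fun S => erefl) (hmg_sym Kamono e1).
  exact (hmg_trans Kamono (hmg_sym Kamono e2) e4).
- move=> [z [hz h]].
  have [h1 e2] := delta_spec hz.
  have [b1 f1] := wp_spec h1.
  have [_ H2 _ _] := hom_alpha n.
  have s1 : hmg A' n (alpha_m n w) (alpha_m n (delta_m n z)) := H2 _ _ hw h1 (hmg_sym Kamono h).
  have s2 : hmg A' n (wp n (delta_m n z)) (pm z).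
    apply: (QI_hmg QIq (proj1 b1) (kc_pm (proj1 hz))).
    exact (hmg_trans Kamono (hmg_sym Kamono f1) (hmg_sym Kamono e2)).
  have s3 := TauHmg s2.
  have s4 : bnd A' n (tm (pm z)).
    apply/bndE; exists (cN (r0 z)); split; first exact: (kcN (kc_r0 (proj1 hz))).
    move=> S; rewrite -(d_sub Jmono sA'A (kcN (kc_r0 (proj1 hz)))) (dN Jmono).
    have dz : forall T : {set L}, dX A z T = 0 := proj2 hz.
    have := decomp z S; rewrite dz /cD.
    have pz0 : forall T : {set L}, pm (dX A z) T = 0.
      by move=> T; rewrite /pm; case: ifP => // _; rewrite dz Fr0 ?leaJ // scaler0.
    rewrite (lm_zero pz0) add0r => /eqP; rewrite eq_sym addr_eq0 => /eqP ->.
    by [].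
  exact (hmg_trans Jmono s1 (hmg_trans Jmono s3 (bnd_hmg s4))).
Qed.

Lemma ex4 : @hom_onto R L (K J A') (K J A) 0 0 (fun c => c).
Proof.
move=> z hz; exists z; split; last exact: (hmg_refl Jmono).
apply: (cyc_sup Jmono sA'A hz) => S hS; apply: (proj1 hz).
apply: contra hS => /andP[_ /eqP c0S]; rewrite c0S eqxx andbT.
by move/eqP: c0S; rewrite cards_eq0 => /eqP ->; rewrite sub0set.
Qed.

Lemma main :
  exists (alpha : nat -> chain (K Ka Cov) -> chain (K J A'))
         (beta : nat -> chain (K J A') -> chain (K J A))
         (delta : nat -> chain (K J A) -> chain (K Ka Cov)),
    (forall i, hom_map i i (alpha i)) /\
    (forall i, hom_map i i (beta i)) /\
    (forall i, hom_map i.+1 i (delta i)) /\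
    (forall i, exact_at i i i (alpha i) (beta i)) /\
    (forall i, exact_at i.+1 i.+1 i (beta i.+1) (delta i)) /\
    (forall i, exact_at i.+1 i i (delta i) (alpha i)) /\
    hom_onto 0 0 (beta 0).
Proof.
exists alpha_m, (fun _ c => c), delta_m.
split; first exact: hom_alpha.
split; first exact: hom_beta.
split; first exact: hom_delta.
split; first exact: ex1.
split; first exact: ex2.
split; first exact: ex3.
exact: ex4.
Qed.
End Spec.
End Gen.


Theorem theorem7 (R : comPzRingType) (disp : Order.disp_t)
    (L : finTBLatticeType disp) (rk : L -> nat) (Fm : L -> lmodType R)
    (Fr : forall x y : L, Fm y -> Fm x) (a : L) :
  geometric rk -> is_sheaf Fm Fr -> a \in atoms rk ->
  let Ct := cover_complex rk Fm Fr in
  let Cd := deletion_complex rk Fm Fr a in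
  let Cr := restriction_complex Fm Fr a in
  exists (alpha : nat -> chain Cr -> chain Cd)
         (beta : nat -> chain Cd -> chain Ct)
         (delta : nat -> chain Ct -> chain Cr),
    (* maps HC_i(L^a) -> HC_i(L_a) -> HC_i(L) and HC_{i+1}(L) -> HC_i(L^a) *)
    (forall i, hom_map i i (alpha i)) /\
    (forall i, hom_map i i (beta i)) /\
    (forall i, hom_map i.+1 i (delta i)) /\
    (* exactness at HC_i(L_a) *)
    (forall i, exact_at i i i (alpha i) (beta i)) /\
    (* exactness at HC_{i+1}(L) *)
    (forall i, exact_at i.+1 i.+1 i (beta i.+1) (delta i)) /\
    (* exactness at HC_i(L^a) *)
    (forall i, exact_at i.+1 i i (delta i) (alpha i)) /\
    (* exactness at HC_0(L): the sequence ends with HC_0(L) -> 0 *)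
    hom_onto 0 0 (beta 0).
Proof.
move=> geo [FrD FrZ Fr1 FrC] aA Ct Cd Cr.
exact: (main FrD FrZ Fr1 FrC geo aA).
Qed.
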